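(* Let $\mathfrak g=so(3)\oplus A_1$ be the real Lie algebra with basis $e_1,\dots,e_4$ and nonzero brackets $[e_1,e_2]=e_3$, $[e_2,e_3]=e_1$, $[e_3,e_1]=e_2$ ($e_4$ central). For $\varepsilon\in(0,1]$ let $K=\tfrac12\sqrt{4\varepsilon^4+1}$, $\theta_\pm=\sqrt{(2K\pm1)/(4K)}$, and $$U_\varepsilon=\begin{pmatrix}0&0&\varepsilon^2&0\\0&-\varepsilon^3&0&0\\0&0&0&\varepsilon\\-\varepsilon^2&0&-1&0\end{pmatrix},\quad W_\varepsilon=\begin{pmatrix}-\theta_-&0&0&\theta_+\\0&1&0&0\\0&0&1&0\\\theta_+&0&0&\theta_-\end{pmatrix},\quad \tilde W_\varepsilon=\begin{pmatrix}-\theta_-&0&-\theta_+&0\\0&-1&0&0\\0&0&0&1\\-\theta_+&0&\theta_-&0\end{pmatrix},$$ $D_\varepsilon=\mathrm{diag}(K+\tfrac12,\varepsilon^3,\varepsilon,K-\tfrac12)$. Then: (i) $U_\varepsilon=W_\varepsilon D_\varepsilon\tilde W_\varepsilon$, the matrices $W_\varepsilon,\tilde W_\varepsilon$ are orthogonal and converge as $\varepsilon\to0^+$ to nonsingular matrices $W_0,\tilde W_0$; (ii) the matrix $U_\varepsilon$ contracts $\mathfrak g$ to the algebra $A_{4.1}$ with nonzero brackets $[e_2,e_4]=e_1$, $[e_3,e_4]=e_2$; (iii) the matrix $\tilde U_\varepsilon=W_0D_\varepsilon\tilde W_0$ contracts $\mathfrak g$ to the algebra $A_{3.1}\oplus A_1$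 with only nonzero bracket $[e_2,e_4]=e_1$, which is not isomorphic to $A_{4.1}$.
   Context: A matrix-valued continuous function $U:(0,1]\to GL_4(\mathbb R)$ contracts a Lie algebra with structure constants $c_{ij}^k$ to the algebra with structure constants $\tilde c_{i'j'}^{k'}=\lim_{\varepsilon\to0^+}(U_\varepsilon)^i_{i'}(U_\varepsilon)^j_{j'}(U_\varepsilon^{-1})^{k'}_kc^k_{ij}$ (summation convention), provided all these limits exist; equivalently the new bracket is $\lim_{\varepsilon\to0^+}U_\varepsilon^{-1}[U_\varepsilon x,U_\varepsilon y]$. *)

(* Defs.v *)
(* R : realType, 4x4 matrices 'M[R]_4, indices 'I_4
   (basis vector e_{n+1} is index n). *)
From HB Require Import structures.
From mathcomp Require Import all_boot all_order all_algebra.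
From mathcomp Require Import all_classical all_reals all_analysis.
Set Implicit Arguments. Unset Strict Implicit. Unset Printing Implicit Defensive.
Import Order.TTheory GRing.Theory Num.Theory.
Import numFieldNormedType.Exports.
Local Open Scope ring_scope.
Local Open Scope classical_set_scope.

Definition mx4 {R : ringType} (l : seq (seq R)) : 'M[R]_4 :=
  \matrix_(i < 4, j < 4) nth 0 (nth [::] l i) j.

(* structure constants: c i j k = c^k_{ij}, i.e. [e_i, e_j] = sum_k c^k_{ij} e_k *)
Definition sconst (R : ringType) := 'I_4 -> 'I_4 -> 'I_4 -> R.

Definition c_so3A1 {R : ringType} : sconst R := fun i j k =>
  match nat_of_ord i, nat_of_ord j, nat_of_ord k with
  | 0%N, 1%N, 2%N => 1 | 1%N, 0%N, 2%N => -1
  | 1%N, 2%N, 0%N => 1 | 2%N, 1%N, 0%N => -1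
  | 2%N, 0%N, 1%N => 1 | 0%N, 2%N, 1%N => -1
  | _, _, _ => 0 end.

Definition c_A41 {R : ringType} : sconst R := fun i j k =>
  match nat_of_ord i, nat_of_ord j, nat_of_ord k with
  | 1%N, 3%N, 0%N => 1 | 3%N, 1%N, 0%N => -1
  | 2%N, 3%N, 1%N => 1 | 3%N, 2%N, 1%N => -1
  | _, _, _ => 0 end.

Definition c_A31A1 {R : ringType} : sconst R := fun i j k =>
  match nat_of_ord i, nat_of_ord j, nat_of_ord k with
  | 1%N, 3%N, 0%N => 1 | 3%N, 1%N, 0%N => -1
  | _, _, _ => 0 end.

Definition transform {R : comUnitRingType} (U : 'M[R]_4) (c : sconst R) : sconst R :=
  fun i' j' k' => \sum_(i < 4) \sum_(j < 4) \sum_(k < 4)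
      U i i' * U j j' * invmx U k' k * c i j k.

Definition contracts {R : realType} (U : R -> 'M[R]_4) (c c' : sconst R) : Prop :=
  (forall e : R, 0 < e <= 1 -> U e \in unitmx) /\
  (forall i' j' k' : 'I_4,
      (fun e => transform (U e) c i' j' k') @ 0^'+ --> c' i' j' k').

Definition lie_iso {R : comUnitRingType} (c c' : sconst R) : Prop :=
  exists P : 'M[R]_4, P \in unitmx /\ transform P c = c'.

Section Mats.
Variable R : realType.
Definition Kc (e : R) : R := Num.sqrt (4 * e ^+ 4 + 1) / 2.
Definition thp (e : R) : R := Num.sqrt ((2 * Kc e + 1) / (4 * Kc e)).
Definition thm (e : R) : R := Num.sqrt ((2 * Kc e - 1) / (4 * Kc e)).

Definition Umx (e : R) : 'M[R]_4 := mx4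
  [:: [:: 0; 0; e ^+ 2; 0];
      [:: 0; - e ^+ 3; 0; 0];
      [:: 0; 0; 0; e];
      [:: - e ^+ 2; 0; -1; 0]].
Definition Wmx (e : R) : 'M[R]_4 := mx4
  [:: [:: - thm e; 0; 0; thp e];
      [:: 0; 1; 0; 0];
      [:: 0; 0; 1; 0];
      [:: thp e; 0; 0; thm e]].
Definition Wtmx (e : R) : 'M[R]_4 := mx4
  [:: [:: - thm e; 0; - thp e; 0];
      [:: 0; -1; 0; 0];
      [:: 0; 0; 0; 1];
      [:: - thp e; 0; thm e; 0]].
Definition Dmx (e : R) : 'M[R]_4 := mx4
  [:: [:: Kc e + 1/2; 0; 0; 0];
      [:: 0; e ^+ 3; 0; 0];
      [:: 0; 0; e; 0];
      [:: 0; 0; 0; Kc e - 1/2]].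
End Mats.

(* Main.v *)
Require Import Defs.
From HB Require Import structures.
From mathcomp Require Import all_boot all_order all_algebra.
From mathcomp Require Import all_classical all_reals all_analysis.
From mathcomp Require Import ring lra.
Import Order.TTheory GRing.Theory Num.Theory.
Import numFieldNormedType.Exports.
Local Open Scope ring_scope.
Local Open Scope classical_set_scope.

Definition o0 : 'I_4 := ord0.
Definition o1 : 'I_4 := lift ord0 ord0.
Definition o2 : 'I_4 := lift ord0 (lift ord0 ord0).
Definition o3 : 'I_4 := lift ord0 (lift ord0 (lift ord0 ord0)).
Section S.
Variable R : realType.

Lemma sparse_so3 (U V : 'M[R]_4) i j k :
  \sum_(a < 4) \sum_(b < 4) \sum_(c < 4) U a i * U b j * V k c * c_so3A1 a b c =
  (U o0 i * U o1 j - U o1 i * U o0 j) * V k o2 + (U o1 i * U o2 j - U o2 i * U o1 j) * V k o0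
  + (U o2 i * U o0 j - U o0 i * U o2 j) * V k o1.
Proof.
rewrite !big_ord_recl !big_ord0 /c_so3A1 /=.
rewrite !mulr0 !mulr1 !mulrN1 !addr0 !add0r.
rewrite /o0 /o1 /o2 /o3; ring.
Qed.

End S.

Definition tA {R : ringType} : sconst R := fun i j k =>
  match nat_of_ord i, nat_of_ord j, nat_of_ord k with
  | 1%N, 3%N, 2%N => -1 | 3%N, 1%N, 2%N => 1 | _, _, _ => 0 end.
Definition tB {R : ringType} : sconst R := fun i j k =>
  match nat_of_ord i, nat_of_ord j, nat_of_ord k with
  | 1%N, 2%N, 3%N => 1 | 2%N, 1%N, 3%N => -1 | _, _, _ => 0 end.

Section S2.
Variable R : realType.
Definition Vmx (e : R) : 'M[R]_4 := mx4
  [:: [:: - (e ^+ 4)^-1; 0; 0; - (e ^+ 2)^-1];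
      [:: 0; - (e ^+ 3)^-1; 0; 0];
      [:: (e ^+ 2)^-1; 0; 0; 0];
      [:: 0; 0; e^-1; 0]].

Lemma invmx_eq (U V : 'M[R]_4) : U *m V = 1%:M -> invmx U = V.
Proof.
move=> UV; have [Uu _] := mulmx1_unit UV.
by rewrite -[invmx U]mulmx1 -UV mulmxA mulVmx // mul1mx.
Qed.

Lemma UV (e : R) : e != 0 -> Umx e *m Vmx e = 1%:M.
Proof.
move=> e0; apply/matrixP => i j; rewrite !mxE !big_ord_recl big_ord0 !mxE /=.
move: i j => [[|[|[|[|//]]]] Hi] [[|[|[|[|//]]]] Hj] /=; rewrite /= ?mxE /=.
all: field; rewrite ?expf_neq0 //.
Qed.

Lemma transU (e : R) i j k : e != 0 ->
  transform (Umx e) c_so3A1 i j k = c_A41 i j k + tA i j k * e ^+ 2 + tB i j k * e ^+ 4.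
Proof.
move=> e0; rewrite /transform sparse_so3 (invmx_eq _ _ (UV e e0)).
move: i j k => [[|[|[|[|//]]]] Hi] [[|[|[|[|//]]]] Hj] [[|[|[|[|//]]]] Hk].
all: rewrite !mxE /c_A41 /tA /tB /=.
all: field; rewrite ?expf_neq0 //.
Qed.
End S2.

Section L.
Variable R : realType.

Lemma cvg_eqv (f : R -> R) (a b : R) : a = b -> f @ 0^'+ --> a -> f @ 0^'+ --> b.
Proof. by move=> ->. Qed.

Lemma lim_pow n : (fun e : R => e ^+ n) @ 0^'+ --> (0 : R) ^+ n.
Proof. apply: cvg_at_right_filter; exact: exprn_continuous. Qed.

Lemma limT (c a b : R) : (fun e => c + a * e ^+ 2 + b * e ^+ 4) @ 0^'+ --> c.
Proof.
apply: (cvg_eqv _ (c + a * 0 ^+ 2 + b * 0 ^+ 4)).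
  by rewrite !expr0n /= !mulr0 !addr0.
apply: cvgD; first apply: cvgD; first exact: cvg_cst.
  exact: (cvgM (cvg_cst a) (lim_pow 2)).
exact: (cvgM (cvg_cst b) (lim_pow 4)).
Qed.

Lemma lim_Kc : Kc (R:=R) @ 0^'+ --> (1/2 : R).
Proof.
have h : (fun e : R => 4 * e ^+ 4 + 1) @ 0^'+ --> (1:R).
  apply: (cvg_eqv _ (4 * 0 ^+ 4 + 1)); first by rewrite expr0n /= mulr0 add0r.
  apply: cvgD; last exact: cvg_cst.
  exact: (cvgM (cvg_cst (4:R)) (lim_pow 4)).
have h2 : (fun e : R => Num.sqrt (4 * e ^+ 4 + 1)) @ 0^'+ --> Num.sqrt (1:R).
  by apply: continuous_cvg; [exact: sqrt_continuous | exact: h].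
rewrite sqrtr1 in h2.
exact: (cvgM h2 (cvg_cst (2^-1:R))).
Qed.

Lemma lim_thp : thp (R:=R) @ 0^'+ --> (1:R).
Proof.
have h : (fun e : R => (2 * Kc e + 1) / (4 * Kc e)) @ 0^'+ --> (1:R).
  apply: (cvg_eqv _ ((2 * (1/2) + 1) * (4 * (1/2))^-1)); first by field.
  apply: cvgM; first exact: (cvgD (cvgM (cvg_cst (2:R)) lim_Kc) (cvg_cst (1:R))).
  apply: cvgV; first by rewrite mul1r mulf_neq0 // invr_eq0.
  exact: (cvgM (cvg_cst (4:R)) lim_Kc).
have h2 : (fun e : R => Num.sqrt ((2 * Kc e + 1) / (4 * Kc e))) @ 0^'+ --> Num.sqrt (1:R).
  by apply: continuous_cvg; [exact: sqrt_continuous | exact: h].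
by rewrite sqrtr1 in h2.
Qed.

Lemma lim_thm : thm (R:=R) @ 0^'+ --> (0:R).
Proof.
have h : (fun e : R => (2 * Kc e - 1) / (4 * Kc e)) @ 0^'+ --> (0:R).
  apply: (cvg_eqv _ ((2 * (1/2) - 1) * (4 * (1/2))^-1)); first by field.
  apply: cvgM; first exact: (cvgB (cvgM (cvg_cst (2:R)) lim_Kc) (cvg_cst (1:R))).
  apply: cvgV; first by rewrite mul1r mulf_neq0 // invr_eq0.
  exact: (cvgM (cvg_cst (4:R)) lim_Kc).
have h2 : (fun e : R => Num.sqrt ((2 * Kc e - 1) / (4 * Kc e))) @ 0^'+ --> Num.sqrt (0:R).
  by apply: continuous_cvg; [exact: sqrt_continuous | exact: h].
by rewrite sqrtr0 in h2.
Qed.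
End L.

Definition t1 {R : ringType} : sconst R := fun i j k =>
  match nat_of_ord i, nat_of_ord j, nat_of_ord k with
  | 0%N, 1%N, 3%N => 1 | 1%N, 0%N, 3%N => -1 | _, _, _ => 0 end.
Definition t2 {R : ringType} : sconst R := fun i j k =>
  match nat_of_ord i, nat_of_ord j, nat_of_ord k with
  | 0%N, 3%N, 1%N => -1 | 3%N, 0%N, 1%N => 1 | _, _, _ => 0 end.

Section P2.
Variable R : realType.

Lemma Kfacts (e : R) : 1/2 <= Kc e /\ (Kc e - 1/2) * (Kc e + 1/2) = e ^+ 4.
Proof.
rewrite /Kc; set s := Num.sqrt _.
have e4 : 0 <= e ^+ 4 by exact: exprn_even_ge0.
have h0 : 0 <= 4 * e ^+ 4 + 1 :> R by lra.
have s0 : 0 <= s := sqrtr_ge0 _.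
have s2 : s ^+ 2 = 4 * e ^+ 4 + 1 := sqr_sqrtr h0.
split.
  have : 1 <= s by nra.
  lra.
have -> : (s / 2 - 1/2) * (s / 2 + 1/2) = (s ^+ 2 - 1) / 4 by field.
by rewrite s2; field.
Qed.

Lemma thfacts (e : R) :
  [/\ 0 < Kc e, thp e ^+ 2 + thm e ^+ 2 = 1, Kc e * (thp e ^+ 2 - thm e ^+ 2) = 1/2
    & 2 * Kc e * thp e * thm e = e ^+ 2].
Proof.
have [K1 Ke] := Kfacts e.
have K0 : 0 < Kc e by lra.
have K0' : Kc e != 0 by rewrite lt0r_neq0.
have hp : thp e ^+ 2 = (2 * Kc e + 1) / (4 * Kc e).
  rewrite /thp sqr_sqrtr //; apply: divr_ge0; lra.
have hm : thm e ^+ 2 = (2 * Kc e - 1) / (4 * Kc e).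
  rewrite /thm sqr_sqrtr //; apply: divr_ge0; lra.
split => //.
- by rewrite hp hm; field; rewrite ?lt0r_neq0.
- by rewrite hp hm; field; rewrite ?lt0r_neq0.
have p0 : 0 <= thp e := sqrtr_ge0 _.
have m0 : 0 <= thm e := sqrtr_ge0 _.
have h : (2 * Kc e * thp e * thm e) ^+ 2 = (e ^+ 2) ^+ 2.
  have -> : (e ^+ 2) ^+ 2 = e ^+ 4 by rewrite -exprM.
  rewrite (exprMn _ (2 * Kc e * thp e)) (exprMn _ (2 * Kc e)) (exprMn _ 2 (Kc e)).
  by rewrite hp hm -Ke; field.
have n1 : 0 <= 2 * Kc e * thp e * thm e.
  apply: mulr_ge0 => //; apply: mulr_ge0 => //; apply: mulr_ge0 => //; exact: ltW.
have n2 : 0 <= e ^+ 2 by exact: exprn_even_ge0.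
have := sqrtr_sqr (2 * Kc e * thp e * thm e).
by rewrite h sqrtr_sqr (ger0_norm n1) (ger0_norm n2) => ->.
Qed.

Lemma partI (e : R) : [/\ Umx e = Wmx e *m Dmx e *m Wtmx e,
         Wmx e *m (Wmx e)^T = 1%:M & Wtmx e *m (Wtmx e)^T = 1%:M].
Proof.
have [K0 hs hd hq] := thfacts e.
split; apply/matrixP => i j; rewrite !mxE !big_ord_recl !big_ord0 !mxE
   ?big_ord_recl ?big_ord0 ?mxE;
  move: i j => [[|[|[|[|//]]]] Hi] [[|[|[|[|//]]]] Hj]; rewrite /= ?mxE /=; lra.
Qed.

Definition W0m : 'M[R]_4 := mx4
  [:: [:: -0; 0; 0; 1]; [:: 0; 1; 0; 0]; [:: 0; 0; 1; 0]; [:: 1; 0; 0; 0]].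
Definition Wt0m : 'M[R]_4 := mx4
  [:: [:: -0; 0; -1; 0]; [:: 0; -1; 0; 0]; [:: 0; 0; 0; 1]; [:: -1; 0; 0; 0]].

Lemma W0orth : W0m *m W0m^T = 1%:M.
Proof.
apply/matrixP => i j; rewrite !mxE !big_ord_recl !big_ord0 !mxE;
  move: i j => [[|[|[|[|//]]]] Hi] [[|[|[|[|//]]]] Hj]; rewrite /= ?mxE /=; lra.
Qed.
Lemma Wt0orth : Wt0m *m Wt0m^T = 1%:M.
Proof.
apply/matrixP => i j; rewrite !mxE !big_ord_recl !big_ord0 !mxE;
  move: i j => [[|[|[|[|//]]]] Hi] [[|[|[|[|//]]]] Hj]; rewrite /= ?mxE /=; lra.
Qed.

Lemma limW i j : (fun e => Wmx e i j) @ 0^'+ --> W0m i j.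
Proof.
have E : (fun e : R => Wmx e i j) = fun e : R => nth 0 (nth [::]
  [:: [:: - thm e; 0; 0; thp e]; [:: 0; 1; 0; 0]; [:: 0; 0; 1; 0];
      [:: thp e; 0; 0; thm e]] i) j.
  by apply/funext => e; rewrite /Wmx /Wtmx /mx4 mxE.
rewrite E; rewrite /W0m mxE.
move: i j {E} => [[|[|[|[|//]]]] Hi] [[|[|[|[|//]]]] Hj] /=;
  first [exact: cvg_cst | exact: lim_thp | exact: lim_thm
        | exact: (cvgN (lim_thm R)) | exact: (cvgN (lim_thp R))].
Qed.

Lemma limWt i j : (fun e => Wtmx e i j) @ 0^'+ --> Wt0m i j.
Proof.
have E : (fun e : R => Wtmx e i j) = fun e : R => nth 0 (nth [::]
  [:: [:: - thm e; 0; - thp e; 0]; [:: 0; -1; 0; 0]; [:: 0; 0; 0; 1];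
      [:: - thp e; 0; thm e; 0]] i) j.
  by apply/funext => e; rewrite /Wmx /Wtmx /mx4 mxE.
rewrite E; rewrite /Wt0m mxE.
move: i j {E} => [[|[|[|[|//]]]] Hi] [[|[|[|[|//]]]] Hj] /=;
  first [exact: cvg_cst | exact: lim_thp | exact: lim_thm
        | exact: (cvgN (lim_thm R)) | exact: (cvgN (lim_thp R))].
Qed.

Lemma cvg_near_eq (f g : R -> R) (l : R) :
  (forall e : R, 0 < e -> f e = g e) -> g @ 0^'+ --> l -> f @ 0^'+ --> l.
Proof.
move=> H Hg; apply: cvg_trans Hg; apply: near_eq_cvg.
near=> e; symmetry; apply: H; near: e; exact: nbhs_right_gt.
Unshelve. all: by end_near.
Qed.

Definition Ut (a b e : R) : 'M[R]_4 := mx4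
  [:: [:: - a; 0; 0; 0]; [:: 0; - e ^+ 3; 0; 0]; [:: 0; 0; 0; e]; [:: 0; 0; - b; 0]].
Definition Vt (a b e : R) : 'M[R]_4 := mx4
  [:: [:: - a^-1; 0; 0; 0]; [:: 0; - (e ^+ 3)^-1; 0; 0]; [:: 0; 0; 0; - b^-1];
      [:: 0; 0; e^-1; 0]].

Lemma UtVt a b e : a != 0 -> b != 0 -> e != 0 -> Ut a b e *m Vt a b e = 1%:M.
Proof.
move=> a0 b0 e0; apply/matrixP => i j; rewrite !mxE !big_ord_recl big_ord0 !mxE /=.
move: i j => [[|[|[|[|//]]]] Hi] [[|[|[|[|//]]]] Hj] /=; rewrite /= ?mxE /=.
all: field; by rewrite ?expf_neq0 ?a0 ?b0 ?e0.
Qed.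

Lemma tildeU e : W0m *m Dmx e *m Wt0m = Ut (Kc e - 1/2) (Kc e + 1/2) e.
Proof.
apply/matrixP => i j; rewrite !mxE !big_ord_recl !big_ord0 !mxE
   ?big_ord_recl ?big_ord0 ?mxE;
  move: i j => [[|[|[|[|//]]]] Hi] [[|[|[|[|//]]]] Hj]; rewrite /= ?mxE /=; ring.
Qed.

Lemma transUt a b e i j k : a != 0 -> b != 0 -> e != 0 ->
  transform (Ut a b e) c_so3A1 i j k =
  c_A31A1 i j k * (e ^+ 4 / a) + t1 i j k * (a * e ^+ 2) + t2 i j k * (a / e ^+ 2).
Proof.
move=> a0 b0 e0; rewrite /transform sparse_so3 (invmx_eq _ _ _ (UtVt a b e a0 b0 e0)).
move: i j k => [[|[|[|[|//]]]] Hi] [[|[|[|[|//]]]] Hj] [[|[|[|[|//]]]] Hk].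
all: rewrite !mxE /c_A31A1 /t1 /t2 /=.
all: field; by rewrite ?expf_neq0 ?a0 ?b0 ?e0.
Qed.

Lemma a_neq0 (e : R) : 0 < e -> Kc e - 1/2 != 0.
Proof.
move=> e0; have [_ Ke] := Kfacts e; apply/eqP => h; move: Ke; rewrite h mul0r => /esym/eqP.
by rewrite expf_eq0 /= (negbTE (lt0r_neq0 e0)).
Qed.

Lemma b_neq0 (e : R) : Kc e + 1/2 != 0.
Proof. have [K1 _] := Kfacts e; apply: lt0r_neq0; lra. Qed.

Lemma L1 : (fun e => e ^+ 4 / (Kc e - 1/2)) @ 0^'+ --> (1 : R).
Proof.
apply: (cvg_near_eq _ (fun e => Kc e + 1/2)).
  move=> e e0 /=; have [_ Ke] := Kfacts e.
  have a0 := a_neq0 e e0.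
  rewrite -Ke mulrAC mulfV; [by rewrite !mul1r | exact: a0].
apply: (cvg_eqv _ _ (1/2 + 1/2)); first by field.
exact: (cvgD (lim_Kc R) (cvg_cst _)).
Qed.

Lemma L2 : (fun e => (Kc e - 1/2) * e ^+ 2) @ 0^'+ --> (0 : R).
Proof.
apply: (cvg_eqv _ _ ((1/2 - 1/2) * 0 ^+ 2)); first by rewrite subrr mul0r.
exact: (cvgM (cvgB (lim_Kc R) (cvg_cst _)) (lim_pow _ 2)).
Qed.

Lemma L3 : (fun e => (Kc e - 1/2) / e ^+ 2) @ 0^'+ --> (0 : R).
Proof.
apply: (cvg_near_eq _ (fun e => e ^+ 2 / (Kc e + 1/2))).
  move=> e e0 /=; have [_ Ke] := Kfacts e.
  have e0' : e != 0 by rewrite lt0r_neq0.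
  move: (b_neq0 e) Ke; move: (Kc e) => K bK Ke.
  apply/eqP; rewrite eqr_div ?expf_neq0 // Ke -exprD.
  by [].
apply: (cvg_eqv _ _ (0 ^+ 2 * (1/2 + 1/2)^-1)); first by rewrite expr0n mul0r.
apply: (cvgM (lim_pow _ 2)); apply: cvgV.
  by apply: lt0r_neq0; lra.
exact: (cvgD (lim_Kc R) (cvg_cst _)).
Qed.

Lemma limT3 (c x y : R) :
  (fun e => c * (e ^+ 4 / (Kc e - 1/2)) + x * ((Kc e - 1/2) * e ^+ 2)
            + y * ((Kc e - 1/2) / e ^+ 2)) @ 0^'+ --> c.
Proof.
apply: (cvg_eqv _ _ (c * 1 + x * 0 + y * 0)); first by rewrite mulr1 !mulr0 !addr0.
apply: cvgD; first apply: cvgD.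
- exact: (cvgM (cvg_cst c) L1).
- exact: (cvgM (cvg_cst x) L2).
- exact: (cvgM (cvg_cst y) L3).
Qed.

Lemma sparse_A31 (P V : 'M[R]_4) i j k :
  \sum_(a < 4) \sum_(b < 4) \sum_(c < 4) P a i * P b j * V k c * c_A31A1 a b c =
  (P o1 i * P o3 j - P o3 i * P o1 j) * V k o0.
Proof.
rewrite !big_ord_recl !big_ord0 /c_A31A1 /=.
rewrite !mulr0 !mulr1 !mulrN1 !addr0 !add0r.
rewrite /o0 /o1 /o2 /o3; ring.
Qed.

Lemma contra3 (x y z w : R) : x * y = 1 -> x * z = 0 -> w * z = 1 -> False.
Proof.
move=> h1 h2 h3.
have x0 : x != 0 by apply/eqP => x0; move: h1; rewrite x0 mul0r => /eqP; rewrite eq_sym oner_eq0.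
move/eqP: h2; rewrite mulf_eq0 (negbTE x0) /= => /eqP z0.
by move: h3; rewrite z0 mulr0 => /eqP; rewrite eq_sym oner_eq0.
Qed.

Lemma not_iso : ~ lie_iso (@c_A31A1 R) c_A41.
Proof.
case=> P [_ H].
have h1 := congr1 (fun f => f o1 o3 o0) H.
have h2 := congr1 (fun f => f o1 o3 o1) H.
have h3 := congr1 (fun f => f o2 o3 o1) H.
move: h1 h2 h3; rewrite /= /transform !sparse_A31 /c_A41 /o0 /o1 /o2 /o3 /=.
exact: contra3.
Qed.

End P2.

Theorem mainTheorem7 (R : realType) :
  (* (i) *)
  (forall e : R, 0 < e <= 1 ->
     [/\ Umx e = Wmx e *m Dmx e *m Wtmx e,
         Wmx e *m (Wmx e)^T = 1%:M & Wtmx e *m (Wtmx e)^T = 1%:M]) /\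
  exists W0 Wt0 : 'M[R]_4,
    [/\ (forall i j : 'I_4, (fun e => Wmx e i j) @ 0^'+ --> W0 i j),
        (forall i j : 'I_4, (fun e => Wtmx e i j) @ 0^'+ --> Wt0 i j),
        W0 \in unitmx & Wt0 \in unitmx] /\
    (* (ii) *)
    [/\ contracts (@Umx R) c_so3A1 c_A41,
    (* (iii) *)
        contracts (fun e => W0 *m Dmx e *m Wt0) c_so3A1 c_A31A1
      & ~ lie_iso (@c_A31A1 R) c_A41].
Proof.
split; first by move=> e _; exact: partI.
exists (W0m R), (Wt0m R).
split; first split.
- exact: limW.
- exact: limWt.
- by have [] := mulmx1_unit (W0orth R).
- by have [] := mulmx1_unit (Wt0orth R).
split.
- split.
    move=> e /andP[e0 _].
    by have [] := mulmx1_unit (UV R e (lt0r_neq0 e0)).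
  move=> i j k.
  apply: (cvg_near_eq _ _ (fun e => c_A41 i j k + tA i j k * e ^+ 2 + tB i j k * e ^+ 4)).
    by move=> e e0; rewrite /= transU // lt0r_neq0.
  exact: limT.
- split.
    move=> e /andP[e0 _]; rewrite tildeU.
    by have [] := mulmx1_unit (UtVt _ _ _ _ (a_neq0 _ _ e0) (b_neq0 _ e) (lt0r_neq0 e0)).
  move=> i j k.
  apply: (cvg_near_eq _ _ (fun e => c_A31A1 i j k * (e ^+ 4 / (Kc e - 1/2))
      + t1 i j k * ((Kc e - 1/2) * e ^+ 2) + t2 i j k * ((Kc e - 1/2) / e ^+ 2))).
    by move=> e e0; rewrite /= tildeU transUt // ?a_neq0 ?b_neq0 ?lt0r_neq0.
  exact: limT3.
- exact: not_iso.
Qed.
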